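(* Let $(I,\mathcal A,\mu)$ be a charge space and $M$ an $\mathcal A$-meanable $L$-structure. Then for every affine $L$-formula $\phi(x_1,\dots,x_n)$ and all $[a^1_i],\dots,[a^n_i]\in M^\mu$, $$\phi^{M^{\mu}}([a^1_i],\dots,[a^n_i])=\int\phi^M(a^1_i,\dots,a^n_i)\,d\mu .$$
   Context: Affine continuous logic: $L$ a Lipschitz language; $L$-structures are complete metric spaces of diameter $\le1$ with Lipschitz interpretations; affine formulas are built from atomic $1,d(t_1,t_2),R(\bar t)$ by $+$, real scalars, $\sup$, $\inf$. A charge space $(I,\mathcal A,\mu)$: $\mathcal A$ is a Boolean algebra of subsets of $I$ and $\mu:\mathcal A\to[0,1]$ is finitely additive with $\mu(I)=1$; integrals of bounded $\mathcal A$-measurable real functions are with respect to $\mu$. The weight $w(M)$ is the least cardinality of a base of the topology of $M$, plus $\aleph_0$. $M$ is $\mathcal A$-meanable if $M$ is finite or $\mathcal A$ is closed under intersections of at most $w(M)$ many members. A map $a:I\to M$ is measurable if $a^{-1}(B)\in\mathcal A$ for every Borel $B\subseteq M$. $M^\mu$ is the set of classes $[a_i]$ of measurable maps $a=(a_i):I\to M$ modulo $\int d(a_i,b_i)d\mu=0$, with metric $d([a_i],[b_i])=\int d(a_i,b_i)d\mu$, $c^{M^\mu}=[c^M]$, $F^{M^\mu}([a_i],\dots)=[F^M(a_i,\dots)]$, $R^{M^\mu}([a_i],\dots)=\int R^M(a_i,\dots)d\mu$. *)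

(* Defs.v *)
From Stdlib Require Import Reals List ClassicalEpsilon.
Open Scope R_scope.

Fixpoint rsum (n : nat) (f : nat -> R) : R :=
  match n with O => 0 | S m => rsum m f + f m end.

(* supremum of a set of reals (0 if empty or unbounded) *)
Definition Rsup (E : R -> Prop) : R :=
  match excluded_middle_informative (bound E /\ exists x, E x) with
  | left H => proj1_sig (completeness E (proj1 H) (proj2 H))
  | right _ => 0
  end.

Definition Rinf (E : R -> Prop) : R := - Rsup (fun y => E (- y)).

Record Lang := {
  Fsym : Type;  Fari : Fsym -> nat;  Flip : Fsym -> R;
  Rsym : Type;  Rari : Rsym -> nat;  Rlip : Rsym -> R
}.

(* Data of a (pre)structure.  An n-ary symbol is interpreted on argument
   lists [nat -> car]; only the first n arguments matter (this follows from
   the Lipschitz condition below). *)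
Record Str (L : Lang) := {
  car  : Type;
  dist : car -> car -> R;
  fint : forall f : Fsym L, (nat -> car) -> car;
  rint : forall r : Rsym L, (nat -> car) -> R
}.
Arguments car {L}. Arguments dist {L}. Arguments fint {L}. Arguments rint {L}.

Definition is_structure (L : Lang) (M : Str L) : Prop :=
  (forall x, dist M x x = 0) /\
  (forall x y, dist M x y = 0 -> x = y) /\
  (forall x y, dist M x y = dist M y x) /\
  (forall x y z, dist M x z <= dist M x y + dist M y z) /\
  (forall x y, dist M x y <= 1) /\
  (forall u : nat -> car M,
      (forall eps, eps > 0 -> exists N, forall m n, (N <= m)%nat -> (N <= n)%nat ->
                   dist M (u m) (u n) < eps) ->
      exists x, forall eps, eps > 0 -> exists N, forall n, (N <= n)%nat ->
                   dist M (u n) x < eps) /\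
  (forall f x y, dist M (fint M f x) (fint M f y)
                 <= Flip L f * rsum (Fari L f) (fun k => dist M (x k) (y k))) /\
  (forall r x y, Rabs (rint M r x - rint M r y)
                 <= Rlip L r * rsum (Rari L r) (fun k => dist M (x k) (y k))).

Inductive term (L : Lang) : Type :=
| tvar : nat -> term L
| tapp : forall f : Fsym L, (nat -> term L) -> term L.

Inductive formula (L : Lang) : Type :=
| fone : formula L
| fdist : term L -> term L -> formula L
| frel : forall r : Rsym L, (nat -> term L) -> formula L
| fplus : formula L -> formula L -> formula L
| fscale : R -> formula L -> formula L
| fsup : nat -> formula L -> formula L
| finf : nat -> formula L -> formula L.

Arguments tvar {L}. Arguments tapp {L}.
Arguments fone {L}. Arguments fdist {L}. Arguments frel {L}. Arguments fplus {L}.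
Arguments fscale {L}. Arguments fsup {L}. Arguments finf {L}.

Definition upd {X : Type} (e : nat -> X) (x : nat) (a : X) : nat -> X :=
  fun k => if Nat.eqb k x then a else e k.

Fixpoint eval_term {L} (S : Str L) (e : nat -> car S) (t : term L) : car S :=
  match t with
  | tvar k => e k
  | tapp f ts => fint S f (fun k => eval_term S e (ts k))
  end.

Fixpoint eval {L} (S : Str L) (dom : car S -> Prop) (e : nat -> car S)
         (p : formula L) : R :=
  match p with
  | fone => 1
  | fdist t1 t2 => dist S (eval_term S e t1) (eval_term S e t2)
  | frel r ts => rint S r (fun k => eval_term S e (ts k))
  | fplus p q => eval S dom e p + eval S dom e q
  | fscale c p => c * eval S dom e p
  | fsup x p => Rsup (fun v => exists a, dom a /\ v = eval S dom (upd e x a) p)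
  | finf x p => Rinf (fun v => exists a, dom a /\ v = eval S dom (upd e x a) p)
  end.

Definition evalM {L} (M : Str L) (e : nat -> car M) (p : formula L) : R :=
  eval M (fun _ => True) e p.

Definition is_charge_space (I : Type) (A : (I -> Prop) -> Prop)
           (mu : (I -> Prop) -> R) : Prop :=
  A (fun _ => False) /\
  (forall X, A X -> A (fun i => ~ X i)) /\
  (forall X Y, A X -> A Y -> A (fun i => X i \/ Y i)) /\
  (forall X, A X -> 0 <= mu X <= 1) /\
  mu (fun _ => True) = 1 /\
  (forall X Y, A X -> A Y -> (forall i, X i -> Y i -> False) ->
     mu (fun i => X i \/ Y i) = mu X + mu Y).

Definition integral (I : Type) (A : (I -> Prop) -> Prop)
           (mu : (I -> Prop) -> R) (f : I -> R) : R :=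
  Rsup (fun v => exists (n : nat) (P : nat -> I -> Prop) (c : nat -> R),
     (forall k, (k < n)%nat -> A (P k)) /\
     (forall i, exists k, (k < n)%nat /\ P k i) /\
     (forall k l i, (k < n)%nat -> (l < n)%nat -> P k i -> P l i -> k = l) /\
     (forall k i, (k < n)%nat -> P k i -> c k <= f i) /\
     v = rsum n (fun k => c k * mu (P k))).

Definition is_open {L} (M : Str L) (U : car M -> Prop) : Prop :=
  forall x, U x -> exists eps, eps > 0 /\ forall y, dist M x y < eps -> U y.

Definition is_borel {L} (M : Str L) (B : car M -> Prop) : Prop :=
  forall S : (car M -> Prop) -> Prop,
    (forall U, is_open M U -> S U) ->
    (forall U, S U -> S (fun x => ~ U x)) ->
    (forall U : nat -> car M -> Prop, (forall n, S (U n)) ->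
        S (fun x => exists n, U n x)) ->
    S B.

Definition measurable_map {L} (I : Type) (A : (I -> Prop) -> Prop) (M : Str L)
           (a : I -> car M) : Prop :=
  forall B, is_borel M B -> A (fun i => B (a i)).

Definition is_base {L} (M : Str L) (Bs : (car M -> Prop) -> Prop) : Prop :=
  (forall U, Bs U -> is_open M U) /\
  (forall U x, is_open M U -> U x ->
     exists V, Bs V /\ V x /\ forall y, V y -> U y).

(* |J| <= w(M) = (least cardinality of a base) + aleph_0 *)
Definition card_le_weight {L} (M : Str L) (J : Type) : Prop :=
  forall Bs, is_base M Bs ->
    exists g : J -> ({U | Bs U} + nat)%type,
      forall j1 j2, g j1 = g j2 -> j1 = j2.

Definition finite_type (X : Type) : Prop := exists l : list X, forall x, In x l.

Definition meanable {L} (I : Type) (A : (I -> Prop) -> Prop) (M : Str L) : Prop :=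
  finite_type (car M) \/
  forall (J : Type) (F : J -> I -> Prop),
    card_le_weight M J -> (forall j, A (F j)) -> A (fun i => forall j, F j i).

(* Elements are represented by maps I -> M (classes are taken implicitly:
   all operations are defined on representatives); quantifiers in M^mu
   range over measurable maps. *)
Definition Mmu {L} (I : Type) (A : (I -> Prop) -> Prop) (mu : (I -> Prop) -> R)
           (M : Str L) : Str L :=
  {| car := I -> car M;
     dist := fun a b => integral I A mu (fun i => dist M (a i) (b i));
     fint := fun f as_ => fun i => fint M f (fun k => as_ k i);
     rint := fun r as_ => integral I A mu (fun i => rint M r (fun k => as_ k i)) |}.

Definition evalMmu {L} (I : Type) (A : (I -> Prop) -> Prop) (mu : (I -> Prop) -> R)
           (M : Str L) (e : nat -> I -> car M) (p : formula L) : R :=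
  eval (Mmu I A mu M) (measurable_map I A M) e p.

(* Main.v *)
From Stdlib Require Import Reals Lra Lia Classical ClassicalEpsilon
  FunctionalExtensionality PropExtensionality ProofIrrelevance.
From mathcomp Require ssreflect ssrbool eqtype boolp wochoice classical_sets.
Require Import Defs.
Open Scope R_scope.

Module WO.
Import mathcomp.boot.ssreflect mathcomp.boot.ssrbool mathcomp.boot.eqtype.
Import boolp wochoice.
Lemma my_wo (T : Type) : exists R : T -> T -> Prop,
  (forall P : T -> Prop, (exists x, P x) -> exists z, P z /\ forall y, P y -> R z y) /\
  (forall x y, R x y -> R y x -> x = y).
Proof.
have [R HR] := well_ordering_principle (classicType T).
have least : forall P : T -> Prop, (exists x, P x) -> exists z, P z /\ forall y, P y -> R z y.
  move=> P [x Px].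
  have [|z [[Pz lb] _]] := HR (fun t => `[< P t >]).
    by exists x; apply/asboolP.
  exists z; split; first by move: Pz => /asboolP.
  move=> y Py; apply: lb; exact/asboolP.
exists (fun x y => R x y); split => //.
move=> x y Rxy Ryx.
have Rrefl : forall t, R t t.
  move=> t; have [z [-> ]] := least (fun u => u = t) (ex_intro _ t (@Logic.eq_refl T t)).
  by apply.
have [|z [_ U]] := HR (fun t => `[< t = x \/ t = y >]).
  by exists x; apply/asboolP; left.
have hx : minimum_of R (fun t => `[< t = x \/ t = y >]) x.
  split; first by apply/asboolP; left.
  move=> t Ht; have := Ht; rewrite /in_mem /= => /asboolP [->|->] //.
have hy : minimum_of R (fun t => `[< t = x \/ t = y >]) y.
  split; first by apply/asboolP; right.
  move=> t Ht; have := Ht; rewrite /in_mem /= => /asboolP [->|->] //.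
by rewrite -(U _ hx) -(U _ hy).
Qed.
End WO.

Module ZZ.
Import mathcomp.boot.ssreflect mathcomp.boot.ssrbool mathcomp.boot.eqtype.
Import boolp classical_sets.
Lemma my_zorn (T : Type) (P : (T -> Prop) -> Prop) :
  (forall F : (T -> Prop) -> Prop, (forall X, F X -> P X) ->
     (forall X Y, F X -> F Y -> (forall t, X t -> Y t) \/ (forall t, Y t -> X t)) ->
     P (fun t => exists X, F X /\ X t)) ->
  exists A, P A /\ forall B, (forall t, A t -> B t) -> P B -> forall t, B t -> A t.
Proof.
move=> H.
have [F FP Ftot|A [PA Amax]] := @Zorn_bigcup T P.
  have -> : bigcup F (fun X => X) = (fun t => exists X, F X /\ X t).
    apply: funext => t; apply: propext; split.
    - by case=> X FX Xt; exists X.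
    - by case=> X [FX Xt]; exists X.
  exact: H.
exists A; split => // B AB PB t Bt.
  apply: Classical_Prop.NNPP => nAt; apply: (Amax B) => //; split => //.
by move=> BA; apply: nAt; apply: BA.
Qed.
End ZZ.

Set Bullet Behavior "Strict Subproofs".

Lemma set_ext {X : Type} (P Q : X -> Prop) : (forall x, P x <-> Q x) -> P = Q.
Proof. intro H; apply functional_extensionality; intro x; apply propositional_extensionality; auto. Qed.

Lemma rsum_ext n f g : (forall k, (k < n)%nat -> f k = g k) -> rsum n f = rsum n g.
Proof. induction n; simpl; intros; auto. rewrite IHn by (intros; apply H; lia). rewrite H by lia. auto. Qed.

Lemma rsum_le n f g : (forall k, (k < n)%nat -> f k <= g k) -> rsum n f <= rsum n g.
Proof. induction n; simpl; intros. lra. assert (f n <= g n) by (apply H; lia).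
 assert (rsum n f <= rsum n g) by (apply IHn; intros; apply H; lia). lra. Qed.

Lemma rsum_plus n f g : rsum n (fun k => f k + g k) = rsum n f + rsum n g.
Proof. induction n; simpl; [lra|rewrite IHn; lra]. Qed.

Lemma rsum_scal n c f : rsum n (fun k => c * f k) = c * rsum n f.
Proof. induction n; simpl; [lra|rewrite IHn; lra]. Qed.

Lemma rsum_const n c : rsum n (fun _ => c) = INR n * c.
Proof. induction n; simpl rsum. simpl; lra. rewrite IHn, S_INR; lra. Qed.

Lemma rsum_nonneg n f : (forall k, (k < n)%nat -> 0 <= f k) -> 0 <= rsum n f.
Proof. intros; replace 0 with (rsum n (fun _ => 0)). apply rsum_le; auto.
 rewrite rsum_const; lra. Qed.

Lemma rsum_mono n m f : (n <= m)%nat -> (forall k, 0 <= f k) -> rsum n f <= rsum m f.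
Proof. intros Hle Hf. induction Hle. lra. simpl. specialize (Hf m). lra. Qed.

Lemma rsum_cat n1 n2 f : rsum (n1 + n2) f = rsum n1 f + rsum n2 (fun k => f (n1 + k)%nat).
Proof. induction n2; simpl. rewrite Nat.add_0_r; lra. rewrite Nat.add_succ_r; simpl; rewrite IHn2; lra. Qed.

Lemma rsum_single n x (f : nat -> R) :
  (forall k, (k < n)%nat -> k <> x -> f k = 0) ->
  rsum n f = if Nat.ltb x n then f x else 0.
Proof.
 induction n; intros; simpl. auto.
 rewrite IHn by (intros; apply H; lia).
 destruct (Nat.ltb x n) eqn:E1; destruct (Nat.ltb x (S n)) eqn:E2;
 rewrite ?Nat.ltb_lt, ?Nat.ltb_ge in *; try lia.
 - rewrite (H n) by lia; lra.
 - assert (x = n) by lia; subst; lra.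
 - rewrite (H n) by lia; lra.
Qed.

Lemma Rsup_spec (E : R -> Prop) : bound E -> (exists x, E x) -> is_lub E (Rsup E).
Proof.
 intros Hb He. unfold Rsup. destruct excluded_middle_informative as [H|H].
 - destruct (completeness E (proj1 H) (proj2 H)); simpl; auto.
 - exfalso; auto.
Qed.

Lemma Rsup_ub (E : R -> Prop) u x : (forall y, E y -> y <= u) -> E x -> x <= Rsup E.
Proof. intros Hu Ex. destruct (Rsup_spec E) as [H1 H2]. exists u; intros y Hy; auto.
 exists x; auto. apply H1; auto. Qed.

Lemma Rsup_lub (E : R -> Prop) u : (exists x, E x) -> (forall y, E y -> y <= u) -> Rsup E <= u.
Proof. intros He Hu. destruct (Rsup_spec E) as [H1 H2]. exists u; intros y Hy; auto. auto.
 apply H2; intros y Hy; auto. Qed.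

Lemma le_eps (x y : R) : (forall eps, eps > 0 -> x <= y + eps) -> x <= y.
Proof. intros H. destruct (Rle_or_lt x y); auto. specialize (H ((x - y)/2)). lra. Qed.

Lemma small_inv (eps : R) : eps > 0 -> exists N : nat, / INR (S N) < eps.
Proof.
 intros He. destruct (INR_archimed eps 1 He) as [n Hn].
 exists n. assert (0 < INR (S n)) by (apply lt_0_INR; lia).
 rewrite S_INR in *. apply (Rmult_lt_reg_r (INR n + 1)). lra.
 rewrite Rinv_l by lra. nra.
Qed.

Lemma nat_above (r : R) : exists B : nat, r <= INR B.
Proof. destruct (INR_archimed 1 r) as [n Hn]. lra. exists n; lra. Qed.

Lemma Rabs_le_between a b : Rabs a <= b -> -b <= a <= b.
Proof. unfold Rabs; destruct Rcase_abs; lra. Qed.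
Section Charge.
Variable (I : Type) (A : (I -> Prop) -> Prop) (mu : (I -> Prop) -> R).
Hypothesis HA : is_charge_space I A mu.

Lemma A_false : A (fun _ => False). Proof. apply HA. Qed.
Lemma A_compl X : A X -> A (fun i => ~ X i). Proof. apply HA. Qed.
Lemma A_or X Y : A X -> A Y -> A (fun i => X i \/ Y i). Proof. apply HA. Qed.
Lemma A_ext X Y : (forall i, X i <-> Y i) -> A X -> A Y.
Proof. intros H; rewrite (set_ext X Y H); auto. Qed.
Lemma mu_ext X Y : (forall i, X i <-> Y i) -> mu X = mu Y.
Proof. intros H; rewrite (set_ext X Y H); auto. Qed.
Lemma A_true : A (fun _ => True).
Proof. apply (A_ext (fun i => ~ False)). tauto. apply A_compl, A_false. Qed.
Lemma A_and X Y : A X -> A Y -> A (fun i => X i /\ Y i).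
Proof. intros. apply (A_ext (fun i => ~ (~ X i \/ ~ Y i))). intros; tauto.
 apply A_compl, A_or; apply A_compl; auto. Qed.
Lemma A_const (P : Prop) : A (fun _ => P).
Proof. destruct (classic P). apply (A_ext (fun _ => True)); [tauto|apply A_true].
 apply (A_ext (fun _ => False)); [tauto|apply A_false]. Qed.
Lemma mu_true : mu (fun _ => True) = 1. Proof. apply HA. Qed.
Lemma mu_range X : A X -> 0 <= mu X <= 1. Proof. apply HA. Qed.
Lemma mu_add X Y : A X -> A Y -> (forall i, X i -> Y i -> False) ->
   mu (fun i => X i \/ Y i) = mu X + mu Y. Proof. apply HA. Qed.
Lemma mu_false : mu (fun _ => False) = 0.
Proof. pose proof (mu_add _ _ A_false A_false (fun _ h _ => h)). cbv beta in H.
 rewrite (mu_ext (fun i => False \/ False) (fun _ => False)) in H by tauto. lra. Qed.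
Lemma mu_split Y X : A X -> A Y -> mu Y = mu (fun i => Y i /\ X i) + mu (fun i => Y i /\ ~ X i).
Proof. intros. rewrite <- (mu_add (fun i => Y i /\ X i) (fun i => Y i /\ ~ X i)).
 apply mu_ext; intros; cbv beta; tauto.
 apply A_and; auto. apply A_and; auto; apply A_compl; auto. intros i [] []; auto. Qed.
Lemma mu_empty X : (forall i, ~ X i) -> mu X = 0.
Proof. intros H; rewrite <- mu_false; apply mu_ext; intros i; split; [apply H|tauto]. Qed.
Lemma I_inhabited : exists i : I, True.
Proof. destruct (classic (exists i : I, True)); auto. exfalso.
 pose proof mu_true. rewrite mu_empty in H0. lra. intros i _; apply H; eauto. Qed.

Definition ind (X : I -> Prop) (i : I) : R :=
  if excluded_middle_informative (X i) then 1 else 0.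
Definition sval (n : nat) (P : nat -> I -> Prop) (c : nat -> R) (i : I) : R :=
  rsum n (fun k => c k * ind (P k) i).
Definition ssum (n : nat) (P : nat -> I -> Prop) (c : nat -> R) : R :=
  rsum n (fun k => c k * mu (P k)).
Definition Alist n (P : nat -> I -> Prop) := forall k, (k < n)%nat -> A (P k).

Lemma pos_gen n P c : Alist n P -> forall X c0, A X ->
  (forall i, X i -> 0 <= c0 + sval n P c i) ->
  0 <= c0 * mu X + rsum n (fun k => c k * mu (fun i => P k i /\ X i)).
Proof.
 induction n; intros HP X c0 HX Hpos.
 - simpl. destruct (classic (exists i, X i)) as [[i Xi]|NE].
   + specialize (Hpos i Xi). unfold sval in Hpos; simpl in Hpos.
     pose proof (mu_range X HX). nra.
   + rewrite mu_empty. lra. intros i Xi; apply NE; eauto.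
 - assert (HPn : A (P n)) by (apply HP; lia).
   assert (HP' : Alist n P) by (intros k Hk; apply HP; lia).
   pose proof (IHn HP' (fun i => X i /\ P n i) (c0 + c n) (A_and _ _ HX HPn)) as H1.
   pose proof (IHn HP' (fun i => X i /\ ~ P n i) c0 (A_and _ _ HX (A_compl _ HPn))) as H2.
   assert (E1 : forall i, X i /\ P n i -> 0 <= c0 + c n + sval n P c i).
   { intros i [Xi Pi]. specialize (Hpos i Xi). unfold sval in *; simpl in Hpos.
     unfold ind at 2 in Hpos. destruct excluded_middle_informative; try tauto. lra. }
   assert (E2 : forall i, X i /\ ~ P n i -> 0 <= c0 + sval n P c i).
   { intros i [Xi Pi]. specialize (Hpos i Xi). unfold sval in *; simpl in Hpos.
     unfold ind at 2 in Hpos. destruct excluded_middle_informative; try tauto. lra. }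
   specialize (H1 E1). specialize (H2 E2).
   rewrite (mu_split X (P n)) by auto.
   simpl.
   rewrite (mu_ext (fun i => P n i /\ X i) (fun i => X i /\ P n i)) by (intros; tauto).
   assert (rsum n (fun k => c k * mu (fun i => P k i /\ X i)) =
     rsum n (fun k => c k * mu (fun i => P k i /\ X i /\ P n i)) +
     rsum n (fun k => c k * mu (fun i => P k i /\ X i /\ ~ P n i))) as ->.
   { rewrite <- rsum_plus. apply rsum_ext; intros k Hk.
     rewrite (mu_split (fun i => P k i /\ X i) (P n)); auto.
     rewrite (mu_ext (fun i => (P k i /\ X i) /\ P n i) (fun i => P k i /\ X i /\ P n i)) by (intros; tauto).
     rewrite (mu_ext (fun i => (P k i /\ X i) /\ ~ P n i) (fun i => P k i /\ X i /\ ~ P n i)) by (intros; tauto).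
     lra. apply A_and; auto. }
   lra.
Qed.

Lemma pos0 n P c : Alist n P -> (forall i, 0 <= sval n P c i) -> 0 <= ssum n P c.
Proof.
 intros HP H. pose proof (pos_gen n P c HP (fun _ => True) 0 A_true) as G.
 unfold ssum. rewrite (rsum_ext n _ (fun k => c k * mu (fun i => P k i /\ True))).
 assert (0 <= 0 * mu (fun _ => True) + rsum n (fun k => c k * mu (fun i => P k i /\ True))).
 apply G; intros; specialize (H i); lra. lra.
 intros k Hk; f_equal; apply mu_ext; tauto.
Qed.

Definition catP n1 (P1 P2 : nat -> I -> Prop) k := if Nat.ltb k n1 then P1 k else P2 (k - n1)%nat.
Definition catc n1 (c1 c2 : nat -> R) k := if Nat.ltb k n1 then c1 k else c2 (k - n1)%nat.

Lemma cat_rsum n1 n2 (f1 f2 : nat -> R) :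
  rsum (n1 + n2) (fun k => if Nat.ltb k n1 then f1 k else f2 (k - n1)%nat) = rsum n1 f1 + rsum n2 f2.
Proof.
 rewrite rsum_cat. f_equal.
 - apply rsum_ext; intros k Hk. destruct (Nat.ltb k n1) eqn:E; auto. rewrite Nat.ltb_ge in E; lia.
 - apply rsum_ext; intros k Hk. destruct (Nat.ltb (n1 + k) n1) eqn:E. rewrite Nat.ltb_lt in E; lia.
   f_equal; lia.
Qed.

Lemma sval_cat n1 P1 c1 n2 P2 c2 i :
  sval (n1 + n2) (catP n1 P1 P2) (catc n1 c1 c2) i = sval n1 P1 c1 i + sval n2 P2 c2 i.
Proof. unfold sval, catP, catc. rewrite <- cat_rsum. apply rsum_ext; intros.
 destruct (Nat.ltb k n1); auto. Qed.
Lemma ssum_cat n1 P1 c1 n2 P2 c2 :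
  ssum (n1 + n2) (catP n1 P1 P2) (catc n1 c1 c2) = ssum n1 P1 c1 + ssum n2 P2 c2.
Proof. unfold ssum, catP, catc. rewrite <- cat_rsum. apply rsum_ext; intros.
 destruct (Nat.ltb k n1); auto. Qed.
Lemma Alist_cat n1 P1 n2 P2 : Alist n1 P1 -> Alist n2 P2 -> Alist (n1 + n2) (catP n1 P1 P2).
Proof. intros H1 H2 k Hk; unfold catP. destruct (Nat.ltb k n1) eqn:E.
 rewrite Nat.ltb_lt in E; auto. rewrite Nat.ltb_ge in E; apply H2; lia. Qed.

Lemma sval_scal n P c s i : sval n P (fun k => s * c k) i = s * sval n P c i.
Proof. unfold sval; rewrite <- rsum_scal; apply rsum_ext; intros; ring. Qed.
Lemma ssum_scal n P c s : ssum n P (fun k => s * c k) = s * ssum n P c.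
Proof. unfold ssum; rewrite <- rsum_scal; apply rsum_ext; intros; ring. Qed.

Lemma cmp n P c m Q d : Alist n P -> Alist m Q ->
  (forall i, sval n P c i <= sval m Q d i) -> ssum n P c <= ssum m Q d.
Proof.
 intros HP HQ H.
 pose proof (pos0 (m + n) (catP m Q P) (catc m d (fun k => -1 * c k)) (Alist_cat _ _ _ _ HQ HP)) as G.
 rewrite ssum_cat, ssum_scal in G.
 assert (0 <= ssum m Q d + -1 * ssum n P c). apply G. intros i. rewrite sval_cat, sval_scal.
 specialize (H i); lra. lra.
Qed.

Definition cP (_ : nat) (_ : I) := True.
Lemma sval_const c i : sval 1 cP (fun _ => c) i = c.
Proof. unfold sval, ind, cP; simpl. destruct excluded_middle_informative; try tauto. lra. Qed.
Lemma ssum_const c : ssum 1 cP (fun _ => c) = c.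
Proof. unfold ssum, cP; simpl. rewrite mu_true; lra. Qed.
Lemma Alist_const : Alist 1 cP. Proof. intros k _; apply A_true. Qed.

Lemma sval_part n P c i k0 : (k0 < n)%nat -> P k0 i ->
  (forall k, (k < n)%nat -> P k i -> k = k0) -> sval n P c i = c k0.
Proof.
 intros Hk0 Pk0 U. unfold sval. rewrite (rsum_single n k0).
 destruct (Nat.ltb k0 n) eqn:E. unfold ind; destruct excluded_middle_informative; try tauto; lra.
 rewrite Nat.ltb_ge in E; lia.
 intros k Hk Hne. unfold ind; destruct excluded_middle_informative as [h|h].
 specialize (U k Hk h); lia. lra.
Qed.

Definition meas (f : I -> R) := forall r, A (fun i => r < f i) /\ A (fun i => f i < r).
Definition bdd (f : I -> R) := exists B : nat, forall i, Rabs (f i) <= INR B.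
Local Notation integral := (integral I A mu).


Definition ispart n (P : nat -> I -> Prop) (c : nat -> R) (f : I -> R) :=
  (forall k, (k < n)%nat -> A (P k)) /\
  (forall i, exists k, (k < n)%nat /\ P k i) /\
  (forall k l i, (k < n)%nat -> (l < n)%nat -> P k i -> P l i -> k = l) /\
  (forall k i, (k < n)%nat -> P k i -> c k <= f i).

Lemma part_sval_le n P c f : ispart n P c f -> forall i, sval n P c i <= f i.
Proof. intros (H1 & H2 & H3 & H4) i. destruct (H2 i) as [k0 [Hk0 Pk0]].
 rewrite (sval_part n P c i k0); auto. intros k Hk Pk; apply (H3 k k0 i); auto. Qed.

Lemma lower_le_upper f m Q d v : Alist m Q -> (forall i, f i <= sval m Q d i) ->
  (exists n P c, ispart n P c f /\ v = rsum n (fun k => c k * mu (P k))) -> v <= ssum m Q d.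
Proof.
 intros HQ Hf (n & P & c & Hp & ->). change (ssum n P c <= ssum m Q d).
 apply cmp; auto. exact (proj1 Hp). intros i. pose proof (part_sval_le n P c f Hp i). specialize (Hf i). lra.
Qed.

Lemma integral_unfold f : integral f = Rsup (fun v => exists n P c, ispart n P c f /\ v = rsum n (fun k => c k * mu (P k))).
Proof. unfold Defs.integral. f_equal. apply set_ext. intros v. unfold ispart. split.
 intros (n & P & c & H1 & H2 & H3 & H4 & H5). exists n, P, c; tauto.
 intros (n & P & c & (H1 & H2 & H3 & H4) & H5). exists n, P, c; tauto. Qed.

Lemma const_part f b : (forall i, b <= f i) -> ispart 1 cP (fun _ => b) f.
Proof. intros Hb. split; [|split; [|split]].
 - intros; apply A_true; auto.
 - intros i; exists 0%nat; split; [lia|exact Logic.I].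
 - intros; lia.
 - intros; auto. Qed.

Lemma int_up f m Q d : (exists b, forall i, b <= f i) -> Alist m Q ->
  (forall i, f i <= sval m Q d i) -> integral f <= ssum m Q d.
Proof.
 intros [b Hb] HQ Hf. rewrite integral_unfold. apply Rsup_lub.
 - exists (rsum 1 (fun k => b * mu (cP k))). exists 1%nat, cP, (fun _ => b). split; auto.
   apply const_part; auto.
 - intros y Hy. eapply lower_le_upper; eauto.
Qed.

Lemma lower_in f n P c : (exists u, forall i, f i <= u) -> ispart n P c f ->
  ssum n P c <= integral f.
Proof.
 intros [u Hu] Hp. rewrite integral_unfold. apply (Rsup_ub _ (ssum 1 cP (fun _ => u))).
 - intros y Hy. eapply lower_le_upper; eauto. apply Alist_const; auto.
   intros i; rewrite sval_const; auto.
 - exists n, P, c; split; auto.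
Qed.

Lemma bdd_below f : bdd f -> exists b, forall i, b <= f i.
Proof. intros [B HB]; exists (- INR B); intros i; specialize (HB i); apply Rabs_le_between in HB; lra. Qed.
Lemma bdd_above f : bdd f -> exists b, forall i, f i <= b.
Proof. intros [B HB]; exists (INR B); intros i; specialize (HB i); apply Rabs_le_between in HB; lra. Qed.

Lemma grid_cover (t0 h : R) : h > 0 -> forall K x, t0 <= x < t0 + INR K * h ->
  exists k, (k < K)%nat /\ t0 + INR k * h <= x < t0 + INR k * h + h.
Proof.
 intros Hh K; induction K; intros x Hx. simpl in Hx; lra.
 destruct (Rlt_or_le x (t0 + INR K * h)).
 - destruct (IHK x) as [k [Hk1 Hk2]]. lra. exists k; split; auto; lia.
 - exists K; split. lia. rewrite S_INR in Hx. lra.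
Qed.

Lemma grid_uniq (t0 h : R) : h > 0 -> forall k l x,
  t0 + INR k * h <= x < t0 + INR k * h + h -> t0 + INR l * h <= x < t0 + INR l * h + h -> k = l.
Proof.
 intros Hh k l x Hk Hl. destruct (Nat.lt_total k l) as [E|[E|E]]; auto; exfalso.
 - assert (INR k + 1 <= INR l) by (rewrite <- S_INR; apply le_INR; lia). nra.
 - assert (INR l + 1 <= INR k) by (rewrite <- S_INR; apply le_INR; lia). nra.
Qed.

Lemma grid f : meas f -> bdd f -> forall N : nat, exists K P c,
  Alist K P /\ ispart K P c f /\
  (forall i, f i <= sval K P (fun k => c k + / INR (S N)) i) /\
  ssum K P (fun k => c k + / INR (S N)) = ssum K P c + / INR (S N).
Proof.
 intros Hm [B HB] N.
 set (h := / INR (S N)).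
 assert (Hh : h > 0). { unfold h. apply Rinv_0_lt_compat, lt_0_INR; lia. }
 set (t0 := - (INR B + 1)).
 set (K := ((2 * B + 2) * S N)%nat).
 set (P := fun k i => t0 + INR k * h <= f i /\ f i < t0 + INR k * h + h).
 set (c := fun k => t0 + INR k * h).
 assert (HK : INR K * h = 2 * INR B + 2).
 { unfold K, h. rewrite mult_INR, Rmult_assoc, Rinv_r. rewrite plus_INR, mult_INR. simpl. lra.
   apply not_0_INR; lia. }
 assert (Hpart : ispart K P c f).
 { split; [|split; [|split]].
   - intros k _. unfold P. apply A_and; auto.
     apply (A_ext (fun i => ~ f i < t0 + INR k * h)). intros; lra.
     apply A_compl; apply Hm. apply Hm.
   - intros i. specialize (HB i). apply Rabs_le_between in HB.
     apply (grid_cover t0 h Hh K (f i)). unfold t0. lra.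
   - intros k l i _ _ Hk Hl. apply (grid_uniq t0 h Hh k l (f i)); auto.
   - intros k i _ [Hk _]. auto. }
 exists K, P, c. split; [|split; [|split]]; auto.
 - exact (proj1 Hpart).
 - intros i. destruct Hpart as (_ & H2 & H3 & _). destruct (H2 i) as [k0 [Hk0 Pk0]].
   rewrite (sval_part K P _ i k0); auto. unfold P in Pk0; unfold c; lra.
   intros k Hk Pk; apply (H3 k k0 i); auto.
 - unfold ssum. rewrite (rsum_ext _ _ (fun k => c k * mu (P k) + h * mu (P k))) by (intros; ring).
   rewrite rsum_plus, rsum_scal. fold (ssum K P c).
   assert (E : rsum K (fun k => mu (P k)) = 1).
   { assert (forall i, sval K P (fun _ => 1) i = sval 1 cP (fun _ => 1) i).
     { intros i. rewrite sval_const. destruct Hpart as (_ & H2 & H3 & _). destruct (H2 i) as [k0 [Hk0 Pk0]].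
       rewrite (sval_part K P _ i k0); auto. intros k Hk Pk; apply (H3 k k0 i); auto. }
     assert (ssum K P (fun _ => 1) = ssum 1 cP (fun _ => 1)).
     { apply Rle_antisym; apply cmp; auto; try exact (proj1 Hpart); try apply Alist_const; auto;
       intros i; rewrite H; lra. }
     rewrite ssum_const in H0; auto. unfold ssum in H0. rewrite <- H0. apply rsum_ext; intros; ring. }
   rewrite E; ring.
Qed.

Lemma int_lo f m Q d : meas f -> bdd f -> Alist m Q ->
  (forall i, sval m Q d i <= f i) -> ssum m Q d <= integral f.
Proof.
 intros Hm Hb HQ Hf. apply le_eps. intros eps He. destruct (small_inv eps He) as [N HN].
 destruct (grid f Hm Hb N) as (K & P & c & HP & Hpart & Hup & Hs).
 assert (ssum m Q d <= ssum K P (fun k => c k + / INR (S N))).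
 { apply cmp; auto. intros i; specialize (Hf i); specialize (Hup i); lra. }
 pose proof (lower_in f K P c (bdd_above f Hb) Hpart). lra.
Qed.

Lemma grid_approx f eps : meas f -> bdd f -> eps > 0 ->
  (exists m Q d, Alist m Q /\ (forall i, sval m Q d i <= f i) /\ integral f - eps <= ssum m Q d) /\
  (exists m Q d, Alist m Q /\ (forall i, f i <= sval m Q d i) /\ ssum m Q d <= integral f + eps).
Proof.
 intros Hm Hb He. destruct (small_inv eps He) as [N HN].
 destruct (grid f Hm Hb N) as (K & P & c & HP & Hpart & Hup & Hs). split.
 - exists K, P, c. split; auto. split. apply part_sval_le; auto.
   pose proof (int_up f K P (fun k => c k + / INR (S N)) (bdd_below f Hb) HP Hup). lra.
 - exists K, P, (fun k => c k + / INR (S N)). split; auto. split; auto.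
   pose proof (int_lo f K P c Hm Hb HP (part_sval_le K P c f Hpart)). lra.
Qed.

Lemma int_char f v : meas f -> bdd f ->
  (forall eps, eps > 0 ->
    (exists m Q d, Alist m Q /\ (forall i, sval m Q d i <= f i) /\ v - eps <= ssum m Q d) /\
    (exists m Q d, Alist m Q /\ (forall i, f i <= sval m Q d i) /\ ssum m Q d <= v + eps)) ->
  integral f = v.
Proof.
 intros Hm Hb H. apply Rle_antisym; apply le_eps; intros eps He; destruct (H eps He) as
   [(m & Q & d & HQ & Hl & Hs) (m' & Q' & d' & HQ' & Hu & Hs')].
 - pose proof (int_up f m' Q' d' (bdd_below f Hb) HQ' Hu). lra.
 - pose proof (int_lo f m Q d Hm Hb HQ Hl). lra.
Qed.

Lemma int_plus f g : meas f -> bdd f -> meas g -> bdd g -> meas (fun i => f i + g i) ->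
  bdd (fun i => f i + g i) -> integral (fun i => f i + g i) = integral f + integral g.
Proof.
 intros Hmf Hbf Hmg Hbg Hm Hb. apply int_char; auto. intros eps He.
 destruct (grid_approx f (eps/2) Hmf Hbf) as [(m1 & Q1 & d1 & H1 & L1 & S1) (m2 & Q2 & d2 & H2 & U2 & S2)]. lra.
 destruct (grid_approx g (eps/2) Hmg Hbg) as [(m3 & Q3 & d3 & H3 & L3 & S3) (m4 & Q4 & d4 & H4 & U4 & S4)]. lra.
 split.
 - exists (m1 + m3)%nat, (catP m1 Q1 Q3), (catc m1 d1 d3). split. apply Alist_cat; auto.
   split. intros i; rewrite sval_cat; specialize (L1 i); specialize (L3 i); lra.
   rewrite ssum_cat; lra.
 - exists (m2 + m4)%nat, (catP m2 Q2 Q4), (catc m2 d2 d4). split. apply Alist_cat; auto.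
   split. intros i; rewrite sval_cat; specialize (U2 i); specialize (U4 i); lra.
   rewrite ssum_cat; lra.
Qed.

Lemma int_scal f s : meas f -> bdd f -> meas (fun i => s * f i) -> bdd (fun i => s * f i) ->
  integral (fun i => s * f i) = s * integral f.
Proof.
 intros Hmf Hbf Hm Hb. apply int_char; auto. intros eps He.
 set (e' := eps / (Rabs s + 1)).
 assert (He' : e' > 0). { unfold e'. apply Rdiv_lt_0_compat; auto. pose proof (Rabs_pos s); lra. }
 assert (Hse : Rabs s * e' <= eps).
 { unfold e'. apply (Rmult_le_reg_r (Rabs s + 1)). pose proof (Rabs_pos s); lra.
   field_simplify. pose proof (Rabs_pos s). nra. pose proof (Rabs_pos s); lra. }
 destruct (grid_approx f e' Hmf Hbf He') as [(m1 & Q1 & d1 & H1 & L1 & S1) (m2 & Q2 & d2 & H2 & U2 & S2)].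
 destruct (Rle_or_lt 0 s) as [Hs|Hs].
 - rewrite Rabs_pos_eq in Hse by auto. split.
   + exists m1, Q1, (fun k => s * d1 k). split; auto. split.
     intros i; rewrite sval_scal; specialize (L1 i); nra. rewrite ssum_scal; nra.
   + exists m2, Q2, (fun k => s * d2 k). split; auto. split.
     intros i; rewrite sval_scal; specialize (U2 i); nra. rewrite ssum_scal; nra.
 - rewrite Rabs_left in Hse by auto. split.
   + exists m2, Q2, (fun k => s * d2 k). split; auto. split.
     intros i; rewrite sval_scal; specialize (U2 i); nra. rewrite ssum_scal; nra.
   + exists m1, Q1, (fun k => s * d1 k). split; auto. split.
     intros i; rewrite sval_scal; specialize (L1 i); nra. rewrite ssum_scal; nra.
Qed.

Lemma meas_const c : meas (fun _ => c).
Proof. intros r; split; apply A_const; auto. Qed.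
Lemma bdd_const c : bdd (fun _ => c).
Proof. destruct (nat_above (Rabs c)) as [B HB]; exists B; auto. Qed.

Lemma int_const c : integral (fun _ => c) = c.
Proof.
 apply int_char. apply meas_const. apply bdd_const. intros eps He. split.
 - exists 1%nat, cP, (fun _ => c). split. apply Alist_const; auto. split.
   intros; rewrite sval_const; lra. rewrite ssum_const; auto; lra.
 - exists 1%nat, cP, (fun _ => c). split. apply Alist_const; auto. split.
   intros; rewrite sval_const; lra. rewrite ssum_const; auto; lra.
Qed.

Lemma int_mono f g : meas f -> bdd f -> meas g -> bdd g -> (forall i, f i <= g i) ->
  integral f <= integral g.
Proof.
 intros Hmf Hbf Hmg Hbg Hle. apply le_eps; intros eps He.
 destruct (grid_approx f eps Hmf Hbf He) as [(m1 & Q1 & d1 & H1 & L1 & S1) _].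
 assert (ssum m1 Q1 d1 <= integral g). apply int_lo; auto. intros i; specialize (L1 i); specialize (Hle i); lra.
 lra.
Qed.
End Charge.

Lemma eval_finf {L} (S : Str L) dom e x p :
  eval S dom e (finf x p) = - eval S dom e (fsup x (fscale (-1) p)).
Proof.
 simpl. unfold Rinf. f_equal. f_equal. apply set_ext. intros v; split.
 - intros [a [Ha Hv]]; exists a; split; auto; lra.
 - intros [a [Ha Hv]]; exists a; split; auto; lra.
Qed.

Section Struct.
Variable (L : Lang) (M : Str L).
Hypothesis HM : is_structure L M.
Variable m0 : car M.

Lemma d_refl x : dist M x x = 0. Proof. apply HM. Qed.
Lemma d_eq0 x y : dist M x y = 0 -> x = y. Proof. apply HM. Qed.
Lemma d_sym x y : dist M x y = dist M y x. Proof. apply HM. Qed.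
Lemma d_tri x y z : dist M x z <= dist M x y + dist M y z. Proof. apply HM. Qed.
Lemma d_le1 x y : dist M x y <= 1. Proof. apply HM. Qed.
Lemma d_nonneg x y : 0 <= dist M x y.
Proof. pose proof (d_tri x y x). rewrite d_refl, (d_sym y x) in H. lra. Qed.
Lemma f_lip f x y : dist M (fint M f x) (fint M f y) <= Flip L f * rsum (Fari L f) (fun k => dist M (x k) (y k)).
Proof. apply HM. Qed.
Lemma r_lip r x y : Rabs (rint M r x - rint M r y) <= Rlip L r * rsum (Rari L r) (fun k => dist M (x k) (y k)).
Proof. apply HM. Qed.

Definition dsum N (x y : nat -> car M) := rsum N (fun k => dist M (x k) (y k)).
Lemma dsum_nonneg N x y : 0 <= dsum N x y.
Proof. apply rsum_nonneg; intros; apply d_nonneg. Qed.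
Lemma dsum_mono N N' x y : (N <= N')%nat -> dsum N x y <= dsum N' x y.
Proof. intros; apply rsum_mono; auto; intros; apply d_nonneg. Qed.
Lemma dsum_le N x y : dsum N x y <= INR N.
Proof. unfold dsum. rewrite <- (Rmult_1_r (INR N)), <- rsum_const. apply rsum_le; intros; apply d_le1. Qed.

Definition LipF N Lc (F : (nat -> car M) -> R) :=
  0 <= Lc /\ forall x y, Rabs (F x - F y) <= Lc * dsum N x y.

Lemma LipF_mono N N' Lc Lc' F : LipF N Lc F -> (N <= N')%nat -> Lc <= Lc' -> LipF N' Lc' F.
Proof. intros [H0 H] HN HL; split. lra. intros x y. specialize (H x y).
 pose proof (dsum_mono N N' x y HN). pose proof (dsum_nonneg N x y). nra. Qed.

Lemma LipF_const c : LipF 0 0 (fun _ => c).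
Proof. split. lra. intros; rewrite Rminus_diag, Rabs_R0. lra. Qed.

Lemma LipF_plus N1 L1 F N2 L2 G : LipF N1 L1 F -> LipF N2 L2 G ->
  LipF (Nat.max N1 N2) (L1 + L2) (fun x => F x + G x).
Proof.
 intros HF HG. apply (LipF_mono _ (Nat.max N1 N2) L1 L1) in HF; try lia; try lra.
 apply (LipF_mono _ (Nat.max N1 N2) L2 L2) in HG; try lia; try lra.
 destruct HF as [HF0 HF], HG as [HG0 HG]. split. lra. intros x y.
 specialize (HF x y); specialize (HG x y).
 replace (F x + G x - (F y + G y)) with ((F x - F y) + (G x - G y)) by ring.
 eapply Rle_trans. apply Rabs_triang. lra.
Qed.

Lemma LipF_scal N Lc F c : LipF N Lc F -> LipF N (Rabs c * Lc) (fun x => c * F x).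
Proof.
 intros [H0 H]; split. pose proof (Rabs_pos c); nra. intros x y.
 replace (c * F x - c * F y) with (c * (F x - F y)) by ring. rewrite Rabs_mult.
 specialize (H x y). pose proof (Rabs_pos c). rewrite Rmult_assoc. apply Rmult_le_compat_l; auto.
Qed.

Lemma LipF_bound N Lc F : LipF N Lc F -> forall x, Rabs (F x) <= Rabs (F (fun _ => m0)) + Lc * INR N.
Proof.
 intros [H0 H] x. specialize (H x (fun _ => m0)). pose proof (dsum_le N x (fun _ => m0)).
 pose proof (Rabs_triang_inv (F x) (F (fun _ => m0))). nra.
Qed.

Lemma dsum_upd N y y' x a : dsum N (upd y x a) (upd y' x a) <= dsum N y y'.
Proof. apply rsum_le; intros k _. unfold upd. destruct (Nat.eqb k x).
 rewrite d_refl; apply d_nonneg. lra. Qed.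

Lemma dsum_upd2 N y x a a' : dsum N (upd y x a) (upd y x a') <= dist M a a'.
Proof.
 unfold dsum. rewrite (rsum_single N x).
 - destruct (Nat.ltb x N). unfold upd; rewrite Nat.eqb_refl; lra. apply d_nonneg.
 - intros k _ Hk. unfold upd. apply Nat.eqb_neq in Hk. rewrite Hk. apply d_refl.
Qed.

Definition supF x (F : (nat -> car M) -> R) (y : nat -> car M) :=
  Rsup (fun v => exists a, True /\ v = F (upd y x a)).

Lemma supF_ub x F B y a : (forall z, Rabs (F z) <= B) -> F (upd y x a) <= supF x F y.
Proof. intros HB. unfold supF. apply (Rsup_ub _ B). intros v [b [_ ->]].
 specialize (HB (upd y x b)). apply Rabs_le_between in HB; lra. exists a; auto. Qed.

Lemma supF_lub x F y u : (forall a, F (upd y x a) <= u) -> supF x F y <= u.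
Proof. intros H. unfold supF. apply Rsup_lub. exists (F (upd y x m0)), m0; auto.
 intros v [b [_ ->]]; auto. Qed.

Lemma LipF_sup N Lc F x : LipF N Lc F -> LipF N Lc (supF x F).
Proof.
 intros HF. pose proof (LipF_bound N Lc F HF) as HB. destruct HF as [H0 H].
 split; auto. intros y y'.
 assert (forall y y', supF x F y <= supF x F y' + Lc * dsum N y y').
 { intros z z'. apply supF_lub. intros a.
   pose proof (supF_ub x F _ z' a HB).
   specialize (H (upd z x a) (upd z' x a)). apply Rabs_le_between in H.
   pose proof (dsum_upd N z z' x a). nra. }
 pose proof (H1 y y'). pose proof (H1 y' y).
 assert (dsum N y' y = dsum N y y') as E.
 { apply rsum_ext; intros; apply d_sym. }
 rewrite E in H3. apply Rabs_le; lra.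
Qed.

Lemma fin_choice (Q : nat -> nat -> R -> Prop) :
  (forall k N N' C C', Q k N C -> (N <= N')%nat -> C <= C' -> Q k N' C') ->
  (forall k, exists N C, 0 <= C /\ Q k N C) ->
  forall n, exists N C, 0 <= C /\ forall k, (k < n)%nat -> Q k N C.
Proof.
 intros Hmon Hall n. induction n.
 - exists 0%nat, 0. split. lra. intros; lia.
 - destruct IHn as (N1 & C1 & HC1 & H1). destruct (Hall n) as (N2 & C2 & HC2 & H2).
   exists (Nat.max N1 N2), (C1 + C2). split. lra. intros k Hk.
   destruct (Nat.eq_dec k n).
   + subst. apply (Hmon n N2 _ C2); auto. lia. lra.
   + apply (Hmon k N1 _ C1); auto. apply H1; lia. lia. lra.
Qed.

Definition TermLip N C (t : term L) := forall x y,
  dist M (eval_term M x t) (eval_term M y t) <= C * dsum N x y.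

Lemma TermLip_mono N N' C C' t : TermLip N C t -> (N <= N')%nat -> C <= C' -> 0 <= C -> TermLip N' C' t.
Proof. intros H HN HC H0 x y. specialize (H x y).
 pose proof (dsum_mono N N' x y HN). pose proof (dsum_nonneg N x y). nra. Qed.

Lemma term_lip t : exists N C, 0 <= C /\ TermLip N C t.
Proof.
 induction t as [k|f ts IH].
 - exists (S k), 1. split. lra. intros x y. simpl. unfold dsum. simpl.
   rewrite Rmult_1_l. pose proof (rsum_nonneg k (fun k0 => dist M (x k0) (y k0))).
   assert (0 <= rsum k (fun k0 => dist M (x k0) (y k0))) by (apply rsum_nonneg; intros; apply d_nonneg). lra.
 - destruct (fin_choice (fun k N C => 0 <= C /\ TermLip N C (ts k))) with (n := Fari L f) as (N & C & HC & H).
   + intros k N N' C C' [H0 H] HN HC. split. lra. eapply TermLip_mono; eauto.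
   + intros k. destruct (IH k) as (N & C & HC & H). exists N, C; auto.
   + exists N, (Rabs (Flip L f) * (INR (Fari L f) * C)). split.
     pose proof (Rabs_pos (Flip L f)). pose proof (pos_INR (Fari L f)). apply Rmult_le_pos; auto. apply Rmult_le_pos; auto.
     intros x y. simpl.
     eapply Rle_trans. apply f_lip.
     set (s := rsum (Fari L f) (fun k => dist M (eval_term M x (ts k)) (eval_term M y (ts k)))).
     assert (Hs0 : 0 <= s) by (apply rsum_nonneg; intros; apply d_nonneg).
     assert (Hs : s <= INR (Fari L f) * (C * dsum N x y)).
     { unfold s. rewrite <- rsum_const. apply rsum_le. intros k Hk. apply (H k Hk). }
     pose proof (Rle_abs (Flip L f)). pose proof (Rabs_pos (Flip L f)).
     apply Rle_trans with (Rabs (Flip L f) * s). nra.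
     rewrite Rmult_assoc. apply Rmult_le_compat_l; auto. lra.
Qed.

Definition FLip (p : formula L) := exists N Lc, LipF N Lc (fun x => evalM M x p).

Lemma formula_lip p : FLip p.
Proof.
 induction p.
 - exists 0%nat, 0. apply (LipF_const 1).
 - destruct (term_lip t) as (N1 & C1 & HC1 & H1). destruct (term_lip t0) as (N2 & C2 & HC2 & H2).
   exists (Nat.max N1 N2), (C1 + C2). split. lra. intros x y. unfold evalM; simpl.
   apply (TermLip_mono _ (Nat.max N1 N2) _ C1) in H1; try lia; try lra.
   apply (TermLip_mono _ (Nat.max N1 N2) _ C2) in H2; try lia; try lra.
   specialize (H1 x y); specialize (H2 x y).
   set (a := eval_term M x t) in *. set (b := eval_term M x t0) in *.
   set (a' := eval_term M y t) in *. set (b' := eval_term M y t0) in *.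
   pose proof (d_tri a a' b). pose proof (d_tri a' b' b). pose proof (d_tri a' a b').
   pose proof (d_tri a b b'). rewrite (d_sym b' b) in *. rewrite (d_sym a' a) in *.
   apply Rabs_le. lra.
 - destruct (fin_choice (fun k N C => 0 <= C /\ TermLip N C (t k))) with (n := Rari L r) as (N & C & HC & H).
   + intros k N N' C C' [H0 H] HN HC. split. lra. eapply TermLip_mono; eauto.
   + intros k. destruct (term_lip (t k)) as (N & C & HC & H). exists N, C; auto.
   + exists N, (Rabs (Rlip L r) * (INR (Rari L r) * C)). split.
     pose proof (Rabs_pos (Rlip L r)). pose proof (pos_INR (Rari L r)). apply Rmult_le_pos; auto. apply Rmult_le_pos; auto.
     intros x y. unfold evalM; simpl.
     eapply Rle_trans. apply r_lip.
     set (s := rsum (Rari L r) (fun k => dist M (eval_term M x (t k)) (eval_term M y (t k)))).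
     assert (Hs0 : 0 <= s) by (apply rsum_nonneg; intros; apply d_nonneg).
     assert (Hs : s <= INR (Rari L r) * (C * dsum N x y)).
     { unfold s. rewrite <- rsum_const. apply rsum_le. intros k Hk. apply (H k Hk). }
     pose proof (Rle_abs (Rlip L r)). pose proof (Rabs_pos (Rlip L r)).
     apply Rle_trans with (Rabs (Rlip L r) * s). nra.
     rewrite Rmult_assoc. apply Rmult_le_compat_l; auto. lra.
 - destruct IHp1 as (N1 & L1 & H1), IHp2 as (N2 & L2 & H2).
   exists (Nat.max N1 N2), (L1 + L2). apply (LipF_plus _ _ _ _ _ _ H1 H2).
 - destruct IHp as (N & Lc & H). exists N, (Rabs r * Lc). apply (LipF_scal _ _ _ r H).
 - destruct IHp as (N & Lc & H). exists N, Lc. apply (LipF_sup _ _ _ n H).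
 - destruct IHp as (N & Lc & H). exists N, (Rabs (-1) * (Rabs (-1) * Lc)).
   pose proof (LipF_scal _ _ _ (-1) (LipF_sup _ _ _ n (LipF_scal _ _ _ (-1) H))) as HS.
   replace (fun x => evalM M x (finf n p)) with (fun x => -1 * supF n (fun z => -1 * evalM M z p) x).
   exact HS.
   apply functional_extensionality; intros x. unfold evalM. rewrite eval_finf. unfold supF.
   cbv beta. simpl. ring.
Qed.
End Struct.

Lemma upd_same {X : Type} (y : nat -> X) x : upd y x (y x) = y.
Proof. apply functional_extensionality; intros k; unfold upd. destruct (Nat.eqb k x) eqn:E; auto.
 apply Nat.eqb_eq in E; subst; auto. Qed.

Lemma upd_pt {X Y : Type} (a : nat -> X -> Y) x b i : (fun k => upd a x b k i) = upd (fun k => a k i) x (b i).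
Proof. apply functional_extensionality; intros k; unfold upd. destruct (Nat.eqb k x); auto. Qed.

Section Main.
Variable (I : Type) (A : (I -> Prop) -> Prop) (mu : (I -> Prop) -> R).
Hypothesis HA : is_charge_space I A mu.
Variable (L : Lang) (M : Str L).
Hypothesis HM : is_structure L M.
Variable m0 : car M.
Variable (K : Type) (emb : K -> car M).
Hypothesis K1 : forall x eps, eps > 0 -> exists k, dist M x (emb k) < eps.
Hypothesis K2 : forall (J : Type) (iota : J -> K), (forall j1 j2, iota j1 = iota j2 -> j1 = j2) ->
  forall F : J -> I -> Prop, (forall j, A (F j)) -> A (fun i => exists j, F j i).
Hypothesis UP : forall (G : car M -> I -> R) Lc, 0 <= Lc -> (forall d r, A (fun i => r < G d i)) ->
  (forall d d' i, Rabs (G d i - G d' i) <= Lc * dist M d d') ->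
  forall b, measurable_map I A M b -> forall r, A (fun i => r < G (b i) i).

Notation LipF := (LipF L M).
Notation integral := (integral I A mu).

Lemma LipF_upd N Lc F x d : LipF N Lc F -> LipF N Lc (fun y => F (upd y x d)).
Proof. intros [H0 H]; split; auto. intros y y'. specialize (H (upd y x d) (upd y' x d)).
 pose proof (dsum_upd L M HM N y y' x d). nra. Qed.

Lemma M1 N : forall Lc F, LipF N Lc F -> forall e, (forall k, measurable_map I A M (e k)) ->
  forall r, A (fun i => r < F (fun k => e k i)).
Proof.
 induction N; intros Lc F [H0 HF] e He r.
 - apply (A_ext I A (fun _ => r < F (fun _ => m0))). 2: apply (A_const I A mu HA).
   intros i. specialize (HF (fun k => e k i) (fun _ => m0)). unfold dsum in HF; simpl in HF.
   rewrite Rmult_0_r in HF. apply Rabs_le_between in HF. split; intros; lra.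
 - set (G := fun d i => F (upd (fun k => e k i) N d)).
   assert (HG1 : forall d r, A (fun i => r < G d i)).
   { intros d r'. apply (IHN Lc (fun x => F (upd x N d))); auto. split; auto. intros x y.
     specialize (HF (upd x N d) (upd y N d)).
     assert (dsum L M (S N) (upd x N d) (upd y N d) = dsum L M N x y).
     { unfold dsum; simpl. unfold upd at 3 4. rewrite Nat.eqb_refl, d_refl by auto. rewrite Rplus_0_r.
       apply rsum_ext; intros k Hk. unfold upd. destruct (Nat.eqb k N) eqn:E; auto.
       apply Nat.eqb_eq in E; lia. }
     rewrite H in HF; auto. }
   assert (HG2 : forall d d' i, Rabs (G d i - G d' i) <= Lc * dist M d d').
   { intros d d' i. unfold G. specialize (HF (upd (fun k => e k i) N d) (upd (fun k => e k i) N d')).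
     pose proof (dsum_upd2 L M HM (S N) (fun k => e k i) N d d'). nra. }
   pose proof (UP G Lc H0 HG1 HG2 (e N) (He N) r) as HU.
   apply (A_ext I A (fun i => r < G (e N i) i)); auto.
   intros i; unfold G. rewrite (upd_same (fun k => e k i) N). tauto.
Qed.

Lemma meas_comp N Lc F e : LipF N Lc F -> (forall k, measurable_map I A M (e k)) ->
  meas I A (fun i => F (fun k => e k i)).
Proof.
 intros HF He r. split. apply (M1 N Lc); auto.
 apply (A_ext I A (fun i => -r < -1 * F (fun k => e k i))). intros; lra.
 apply (M1 N (Rabs (-1) * Lc) (fun x => -1 * F x)); auto. apply LipF_scal; auto.
Qed.

Lemma bdd_comp N Lc F e : LipF N Lc F -> bdd I (fun i => F (fun k => e k i)).
Proof.
 intros HF. destruct (nat_above (Rabs (F (fun _ => m0)) + Lc * INR N)) as [B HB].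
 exists B. intros i. pose proof (LipF_bound L M HM m0 N Lc F HF (fun k => e k i)). lra.
Qed.

Lemma SEL (U : K -> I -> Prop) : (forall k, A (U k)) -> (forall i, exists k, U k i) ->
  exists b : I -> car M, measurable_map I A M b /\ forall i, exists k, b i = emb k /\ U k i.
Proof.
 intros HU Hcov. destruct (WO.my_wo K) as (R & Rleast & Ranti).
 set (W := fun k i => U k i /\ forall k', R k' k -> k' <> k -> ~ U k' i).
 assert (HW : forall k, A (W k)).
 { intros k. unfold W. apply (A_and I A mu HA); auto.
   apply (A_ext I A (fun i => ~ exists j : {k' | R k' k /\ k' <> k}, U (proj1_sig j) i)).
   { intros i; split.
     - intros H k' H1 H2 H3. apply H. exists (exist _ k' (conj H1 H2)); auto.
     - intros H [[k' [H1 H2]] H3]. simpl in H3. apply (H k'); auto. }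
   apply (A_compl I A mu HA); auto. apply (K2 _ (@proj1_sig _ _)).
   - intros [j1 p1] [j2 p2]; simpl; intros; subst. f_equal; apply proof_irrelevance.
   - intros; auto. }
 assert (Hex : forall i, exists k, W k i).
 { intros i. destruct (Rleast (fun k => U k i) (Hcov i)) as [z [Hz Hmin]].
   exists z; split; [exact Hz|]. intros kk Hk Hne Uk. apply Hne. apply Ranti; auto. }
 assert (Huniq : forall k1 k2 i, W k1 i -> W k2 i -> k1 = k2).
 { intros k1 k2 i [U1 H1] [U2 H2]. destruct (classic (k1 = k2)) as [|Hne]; auto. exfalso.
   destruct (Rleast (fun k => k = k1 \/ k = k2)) as [z [[->| ->] Hmin]]; eauto.
   - apply (H2 k1); auto.
   - apply (H1 k2); auto. }
 set (ch := fun i => proj1_sig (constructive_indefinite_description _ (Hex i))).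
 assert (Hch : forall i, W (ch i) i) by (intros; unfold ch; apply proj2_sig).
 exists (fun i => emb (ch i)). split.
 - intros B _. apply (A_ext I A (fun i => exists k, W k i /\ B (emb k))).
   + intros i; split.
     * intros [k [Wk Bk]]. rewrite (Huniq (ch i) k i); auto.
     * intros Hb. exists (ch i); auto.
   + apply (K2 K (fun k => k)); auto. intros k. apply (A_and I A mu HA); auto. apply (A_const I A mu HA).
 - intros i. exists (ch i); split; auto. apply Hch.
Qed.

Definition Thm (p : formula L) := forall a, (forall k, measurable_map I A M (a k)) ->
  evalMmu I A mu M a p = integral (fun i => evalM M (fun k => a k i) p).

Lemma eval_term_Mmu t a i : eval_term (Mmu I A mu M) a t i = eval_term M (fun k => a k i) t.
Proof. induction t; simpl; auto. f_equal. apply functional_extensionality; auto. Qed.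

Lemma comp_nice p a : (forall k, measurable_map I A M (a k)) ->
  meas I A (fun i => evalM M (fun k => a k i) p) /\ bdd I (fun i => evalM M (fun k => a k i) p).
Proof. intros Ha. destruct (formula_lip L M HM m0 p) as (N & Lc & H). split.
 apply (meas_comp N Lc (fun x => evalM M x p)); auto. apply (bdd_comp N Lc (fun x => evalM M x p)); auto. Qed.

Lemma thm_plus p q : Thm p -> Thm q -> Thm (fplus p q).
Proof.
 intros Hp Hq a Ha. unfold evalMmu; simpl. fold (evalMmu I A mu M a p) (evalMmu I A mu M a q).
 rewrite Hp, Hq by auto. unfold evalM; simpl. fold (evalM M).
 destruct (comp_nice p a Ha), (comp_nice q a Ha), (comp_nice (fplus p q) a Ha).
 symmetry; apply int_plus; auto.
Qed.

Lemma thm_scale c p : Thm p -> Thm (fscale c p).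
Proof.
 intros Hp a Ha. unfold evalMmu; simpl. fold (evalMmu I A mu M a p).
 rewrite Hp by auto. unfold evalM; simpl. fold (evalM M).
 destruct (comp_nice p a Ha), (comp_nice (fscale c p) a Ha).
 symmetry; apply int_scal; auto.
Qed.

Lemma thm_one : Thm fone.
Proof. intros a Ha. unfold evalMmu, evalM; simpl. symmetry; apply (int_const I A mu HA). Qed.

Lemma thm_dist t1 t2 : Thm (fdist t1 t2).
Proof. intros a Ha. unfold evalMmu, evalM; simpl. f_equal. apply functional_extensionality; intros i.
 rewrite !eval_term_Mmu. auto. Qed.

Lemma thm_rel r ts : Thm (frel r ts).
Proof. intros a Ha. unfold evalMmu, evalM; simpl. f_equal. apply functional_extensionality; intros i.
 f_equal. apply functional_extensionality; intros k. rewrite !eval_term_Mmu. auto. Qed.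

Lemma meas_upd a x b : (forall k, measurable_map I A M (a k)) -> measurable_map I A M b ->
  forall k, measurable_map I A M (upd a x b k).
Proof. intros Ha Hb k. unfold upd. destruct (Nat.eqb k x); auto. Qed.

Lemma thm_sup x p : Thm p -> Thm (fsup x p).
Proof.
 intros Hp a Ha.
 destruct (formula_lip L M HM m0 p) as (N & Lc & HF).
 set (F := fun y => evalM M y p) in *.
 set (Phi := supF L M x F).
 assert (HPhi : LipF N Lc Phi) by (apply LipF_sup; auto).
 change (evalMmu I A mu M a (fsup x p)) with
   (Rsup (fun v => exists b, measurable_map I A M b /\ v = evalMmu I A mu M (upd a x b) p)).
 change (fun i => evalM M (fun k => a k i) (fsup x p)) with (fun i => Phi (fun k => a k i)).
 set (T := integral (fun i => Phi (fun k => a k i))).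
 assert (Hmb : forall b, measurable_map I A M b ->
    evalMmu I A mu M (upd a x b) p = integral (fun i => F (fun k => upd a x b k i))).
 { intros b Hb. apply Hp. apply meas_upd; auto. }
 assert (HmPhi : meas I A (fun i => Phi (fun k => a k i))) by (apply (meas_comp N Lc); auto).
 assert (HbPhi : bdd I (fun i => Phi (fun k => a k i))) by (apply (bdd_comp N Lc); auto).
 assert (HB : exists B, forall z, Rabs (F z) <= B).
 { exists (Rabs (F (fun _ => m0)) + Lc * INR N). apply (LipF_bound L M HM m0 N Lc F HF). }
 destruct HB as [B HB].
 assert (Hle : forall b, measurable_map I A M b -> evalMmu I A mu M (upd a x b) p <= T).
 { intros b Hb. rewrite Hmb by auto. apply (int_mono I A mu HA).
   apply (meas_comp N Lc); auto. apply meas_upd; auto. apply (bdd_comp N Lc); auto. auto. auto.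
   intros i. rewrite upd_pt. apply (supF_ub L M x F B); auto. }
 apply Rle_antisym.
 - apply Rsup_lub.
   + exists (evalMmu I A mu M (upd a x (fun _ => m0)) p), (fun _ => m0). split; auto.
     intros B' _. apply (A_const I A mu HA).
   + intros v [b [Hb ->]]. auto.
 - apply le_eps. intros eps He.
   set (U := fun k i => Phi (fun k => a k i) - eps < F (upd (fun k => a k i) x (emb k))).
   assert (HU : forall k, A (U k)).
   { intros k. set (H := fun y => F (upd y x (emb k)) + -1 * Phi y).
     assert (LipF (Nat.max N N) (Lc + Rabs (-1) * Lc) H).
     { apply (LipF_plus L M HM). apply LipF_upd; auto. apply LipF_scal; auto. }
     apply (A_ext I A (fun i => - eps < H (fun k => a k i))).
     { intros i; unfold U, H; split; intros; lra. }
     apply (M1 _ _ _ H0); auto. }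
   assert (Hcov : forall i, exists k, U k i).
   { intros i. set (y := fun k => a k i).
     assert (exists m, Phi y - eps / 2 < F (upd y x m)) as [m Hm].
     { destruct (classic (exists m, Phi y - eps / 2 < F (upd y x m))) as [|Hn]; auto.
       exfalso. assert (Phi y <= Phi y - eps / 2). apply (supF_lub L M m0).
       intros a0. apply Rnot_lt_le. intros Hc; apply Hn; eauto. lra. }
     assert (Hd : eps / (2 * (Lc + 1)) > 0).
     { destruct HF as [HL _]. apply Rdiv_lt_0_compat; lra. }
     destruct (K1 m _ Hd) as [k Hk]. exists k. unfold U. fold y.
     destruct HF as [HL HF']. specialize (HF' (upd y x m) (upd y x (emb k))).
     pose proof (dsum_upd2 L M HM N y x m (emb k)).
     apply Rabs_le_between in HF'.
     assert (Lc * dist M m (emb k) <= eps / 2).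
     { assert (Lc * dist M m (emb k) <= Lc * (eps / (2 * (Lc + 1)))).
       { apply Rmult_le_compat_l; lra. }
       assert (Lc * (eps / (2 * (Lc + 1))) <= eps / 2).
       { apply (Rmult_le_reg_r (2 * (Lc + 1))). lra. field_simplify; try lra; try nra. }
       lra. }
     assert (Lc * dsum L M N (upd y x m) (upd y x (emb k)) <= Lc * dist M m (emb k)).
     { apply Rmult_le_compat_l; lra. }
     lra. }
   destruct (SEL U HU Hcov) as (b & Hb & Hbk).
   assert (Hlow : T - eps <= evalMmu I A mu M (upd a x b) p).
   { rewrite Hmb by auto.
     assert (integral (fun i => Phi (fun k => a k i) + (fun _ => - eps) i) = T + - eps).
     { rewrite (int_plus I A mu HA (fun i => Phi (fun k => a k i)) (fun _ => - eps)); auto.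
       rewrite (int_const I A mu HA). auto.
       apply (meas_const I A mu HA). apply (bdd_const I).
       apply (meas_comp (Nat.max N 0) (Lc + 0) (fun y => Phi y + - eps)); auto.
       apply (LipF_plus L M HM); auto. apply LipF_const.
       apply (bdd_comp (Nat.max N 0) (Lc + 0) (fun y => Phi y + - eps)); auto.
       apply (LipF_plus L M HM); auto. apply LipF_const. }
     assert (integral (fun i => Phi (fun k => a k i) + (fun _ => - eps) i) <=
             integral (fun i => F (fun k => upd a x b k i))).
     { apply (int_mono I A mu HA).
       apply (meas_comp (Nat.max N 0) (Lc + 0) (fun y => Phi y + - eps)); auto.
       apply (LipF_plus L M HM); auto. apply LipF_const.
       apply (bdd_comp (Nat.max N 0) (Lc + 0) (fun y => Phi y + - eps)); auto.
       apply (LipF_plus L M HM); auto. apply LipF_const.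
       apply (meas_comp N Lc); auto. apply meas_upd; auto. apply (bdd_comp N Lc); auto.
       intros i. rewrite upd_pt. destruct (Hbk i) as [k [Hbi Uk]]. rewrite Hbi. unfold U in Uk. lra. }
     lra. }
   assert (evalMmu I A mu M (upd a x b) p <= Rsup (fun v => exists b, measurable_map I A M b /\ v = evalMmu I A mu M (upd a x b) p)).
   { apply (Rsup_ub _ T). intros v [b' [Hb' ->]]; auto. exists b; auto. }
   lra.
Qed.

Lemma thm_inf x p : Thm p -> Thm (finf x p).
Proof.
 intros Hp a Ha. pose proof (thm_sup x _ (thm_scale (-1) p Hp) a Ha) as H.
 pose proof (thm_scale (-1) _ (thm_sup x _ (thm_scale (-1) p Hp)) a Ha) as H2.
 unfold evalMmu in *. rewrite eval_finf.
 replace (fun i => evalM M (fun k => a k i) (finf x p)) with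
   (fun i => evalM M (fun k => a k i) (fscale (-1) (fsup x (fscale (-1) p)))).
 rewrite <- H2. simpl. ring.
 apply functional_extensionality; intros i. unfold evalM. rewrite eval_finf. simpl. ring.
Qed.

Lemma thm_all p : Thm p.
Proof.
 induction p.
 - apply thm_one.
 - apply thm_dist.
 - apply thm_rel.
 - apply thm_plus; auto.
 - apply thm_scale; auto.
 - apply thm_sup; auto.
 - apply thm_inf; auto.
Qed.
End Main.

Section Final.
Variable (I : Type) (A : (I -> Prop) -> Prop) (mu : (I -> Prop) -> R).
Hypothesis HA : is_charge_space I A mu.
Variable (L : Lang) (M : Str L).
Hypothesis HM : is_structure L M.

Lemma open_borel U : is_open M U -> is_borel M U.
Proof. intros HU S H1 H2 H3. apply H1; auto. Qed.
Lemma compl_borel U : is_borel M U -> is_borel M (fun x => ~ U x).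
Proof. intros HU S H1 H2 H3. apply H2. apply HU; auto. Qed.
Lemma ball_open c r : is_open M (fun y => dist M c y < r).
Proof. intros x Hx. exists (r - dist M c x). split. lra. intros y Hy.
 pose proof (d_tri L M HM c x y). lra. Qed.
Lemma ball_meas c r b : measurable_map I A M b -> A (fun i => dist M c (b i) < r).
Proof. intros Hb. apply (Hb (fun y => dist M c y < r)). apply open_borel, ball_open. Qed.
Lemma single_meas d b : measurable_map I A M b -> A (fun i => b i = d).
Proof.
 intros Hb. apply (A_ext I A (fun i => ~ (b i <> d))). intros; split; [apply NNPP|tauto].
 apply (Hb (fun y => ~ y <> d)). apply compl_borel, open_borel.
 intros x Hx. exists (dist M x d). split.
 - pose proof (d_nonneg L M HM x d). destruct H; auto. exfalso; apply Hx. apply (d_eq0 L M HM); auto.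
 - intros y Hy Hyd. subst; lra.
Qed.

Section Fin.
Hypothesis Hfin : finite_type (car M).

Lemma fin_K2 (J : Type) (iota : J -> car M) : (forall j1 j2, iota j1 = iota j2 -> j1 = j2) ->
  forall F : J -> I -> Prop, (forall j, A (F j)) -> A (fun i => exists j, F j i).
Proof.
 intros Hinj F HF. destruct Hfin as [l Hl].
 assert (forall l', A (fun i => exists j, List.In (iota j) l' /\ F j i)).
 { induction l' as [|m l' IH].
   - apply (A_ext I A (fun _ => False)). intros i; split; [tauto|]. intros [j [[] _]].
     apply (A_false I A mu HA).
   - apply (A_ext I A (fun i => (exists j, iota j = m /\ F j i) \/ (exists j, List.In (iota j) l' /\ F j i))).
     { intros i; split.
       - intros [[j [H1 H2]]|[j [H1 H2]]]; exists j; split; auto; simpl; auto.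
       - intros [j [[H1|H1] H2]]; [left|right]; exists j; auto. }
     apply (A_or I A mu HA); auto.
     destruct (classic (exists j0, iota j0 = m)) as [[j0 Hj0]|Hn].
     + apply (A_ext I A (F j0)); auto. intros i; split.
       * intros; exists j0; auto.
       * intros [j [H1 H2]]. rewrite <- Hj0 in H1. apply Hinj in H1. subst; auto.
     + apply (A_ext I A (fun _ => False)). intros i; split; [tauto|]. intros [j [H1 _]]; eauto.
       apply (A_false I A mu HA). }
 apply (A_ext I A (fun i => exists j, List.In (iota j) l /\ F j i)); auto.
 intros i; split. intros [j [_ Hj]]; eauto. intros [j Hj]; exists j; auto.
Qed.

Lemma fin_UP (G : car M -> I -> R) Lc : 0 <= Lc -> (forall d r, A (fun i => r < G d i)) ->
  (forall d d' i, Rabs (G d i - G d' i) <= Lc * dist M d d') ->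
  forall b, measurable_map I A M b -> forall r, A (fun i => r < G (b i) i).
Proof.
 intros _ HG _ b Hb r.
 apply (A_ext I A (fun i => exists d, b i = d /\ r < G d i)).
 { intros i; split. intros [d [-> H]]; auto. intros; eauto. }
 apply (fin_K2 (car M) (fun d => d)); auto. intros d. apply (A_and I A mu HA); auto.
 apply single_meas; auto.
Qed.
End Fin.

Section Inf.
Hypothesis Hcl : forall (J : Type) (F : J -> I -> Prop),
    card_le_weight M J -> (forall j, A (F j)) -> A (fun i => forall j, F j i).

Lemma inf_union (J : Type) (F : J -> I -> Prop) : card_le_weight M J -> (forall j, A (F j)) ->
  A (fun i => exists j, F j i).
Proof.
 intros HJ HF. apply (A_ext I A (fun i => ~ forall j, ~ F j i)).
 { intros i; split. intros H; apply NNPP; intros Hn; apply H; intros j Hj; apply Hn; eauto.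
   intros [j Hj] H; apply (H j); auto. }
 apply (A_compl I A mu HA). apply Hcl; auto. intros j; apply (A_compl I A mu HA); auto.
Qed.

Definition sep (del : R) (S : car M -> Prop) := forall x y, S x -> S y -> x <> y -> del <= dist M x y.

Lemma ext_lemma del S : del > 0 -> sep del S -> exists T, (forall x, S x -> T x) /\ sep del T /\
  forall z, exists y, T y /\ dist M y z < del.
Proof.
 intros Hdel HS.
 destruct (ZZ.my_zorn (car M) (fun X => sep del (fun x => X x \/ S x))) as [A0 [PA0 Amax]].
 { intros F HF Hch x y Hx Hy Hne.
   destruct Hx as [[X1 [FX1 X1x]]|Sx]; destruct Hy as [[X2 [FX2 X2y]]|Sy].
   - destruct (Hch X1 X2 FX1 FX2) as [H12|H21].
     + apply (HF X2 FX2); auto.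
     + apply (HF X1 FX1); auto.
   - apply (HF X1 FX1); auto.
   - apply (HF X2 FX2); auto.
   - apply HS; auto. }
 exists (fun x => A0 x \/ S x). split; [auto|split; auto].
 intros z. destruct (classic (exists y, (A0 y \/ S y) /\ dist M y z < del)) as [|Hn]; auto.
 exfalso.
 assert (PB : sep del (fun x => (A0 x \/ x = z) \/ S x)).
 { intros x y Hx Hy Hne.
   assert (Hfar : forall w, A0 w \/ S w -> w <> z -> del <= dist M w z).
   { intros w Hw Hwz. apply Rnot_lt_le. intros Hlt. apply Hn. eauto. }
   destruct Hx as [[Ax| ->]|Sx]; destruct Hy as [[Ay| ->]|Sy];
     try (apply PA0; auto; fail).
   - apply Hfar; auto.
   - rewrite d_sym by auto. apply Hfar; auto.
   - tauto.
   - rewrite d_sym by auto. apply Hfar; auto.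
   - apply Hfar; auto. }
 assert (A0 z). { apply (Amax (fun x => A0 x \/ x = z)); auto. }
 apply Hn. exists z. split; auto. rewrite d_refl by auto. lra.
Qed.

Definition delta (n : nat) := / INR (S n).
Lemma delta_pos n : delta n > 0.
Proof. unfold delta. apply Rinv_0_lt_compat, lt_0_INR; lia. Qed.
Lemma delta_S n : delta (S n) <= delta n.
Proof. unfold delta. apply Rinv_le_contravar. apply lt_0_INR; lia. apply le_INR; lia. Qed.
Lemma delta_anti n m : (n <= m)%nat -> delta m <= delta n.
Proof. induction 1. lra. pose proof (delta_S m). lra. Qed.

Lemma ext_ex del S : exists T, del > 0 -> sep del S -> (forall x, S x -> T x) /\ sep del T /\
  forall z, exists y, T y /\ dist M y z < del.
Proof.
 destruct (classic (del > 0 /\ sep del S)) as [[H1 H2]|Hn].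
 - destruct (ext_lemma del S H1 H2) as [T HT]. exists T; auto.
 - exists S. intros H1 H2; exfalso; auto.
Qed.

Definition extS del S := proj1_sig (constructive_indefinite_description _ (ext_ex del S)).
Lemma extS_spec del S : del > 0 -> sep del S -> (forall x, S x -> extS del S x) /\ sep del (extS del S) /\
  forall z, exists y, extS del S y /\ dist M y z < del.
Proof. unfold extS. destruct constructive_indefinite_description; simpl; auto. Qed.

Fixpoint Sq (n : nat) : car M -> Prop :=
  match n with
  | O => extS (delta 0) (fun _ => False)
  | S n => extS (delta (S n)) (Sq n)
  end.

Lemma Sq_spec n : sep (delta n) (Sq n) /\ (forall z, exists y, Sq n y /\ dist M y z < delta n) /\
  (forall x, Sq n x -> Sq (S n) x).
Proof.
 induction n.
 - assert (H : sep (delta 0) (Sq 0) /\ forall z, exists y, Sq 0 y /\ dist M y z < delta 0).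
   { simpl. destruct (extS_spec (delta 0) (fun _ => False)) as (_ & H2 & H3); auto.
     apply delta_pos. intros x y []. }
   split; [apply H|split; [apply H|]].
   intros x Hx. simpl. apply (extS_spec (delta 1) (Sq 0)). apply delta_pos.
   intros a b Ha Hb Hab. pose proof (delta_S 0). pose proof (proj1 H a b Ha Hb Hab). simpl in *; lra. auto.
 - destruct IHn as (H1 & H2 & H3).
   assert (Hs : sep (delta (S n)) (Sq n)).
   { intros a b Ha Hb Hab. pose proof (delta_S n). pose proof (H1 a b Ha Hb Hab). lra. }
   destruct (extS_spec (delta (S n)) (Sq n) (delta_pos _) Hs) as (E1 & E2 & E3).
   split; [exact E2|split; [exact E3|]].
   intros x Hx. change (Sq (S (S n))) with (extS (delta (S (S n))) (Sq (S n))).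
   apply (extS_spec (delta (S (S n))) (Sq (S n))). apply delta_pos.
   intros a b Ha Hb Hab. pose proof (delta_S (S n)). pose proof (E2 a b Ha Hb Hab). lra. auto.
Qed.

Lemma Sq_mono n m : (n <= m)%nat -> forall x, Sq n x -> Sq m x.
Proof. induction 1; auto. intros x Hx. apply (proj2 (proj2 (Sq_spec m))); auto. Qed.

Definition KD := {x : car M | exists n, Sq n x}.
Definition embD (k : KD) : car M := proj1_sig k.

Lemma KD_dense x eps : eps > 0 -> exists k : KD, dist M x (embD k) < eps.
Proof.
 intros He. destruct (small_inv eps He) as [N HN].
 destruct (proj1 (proj2 (Sq_spec N)) x) as [y [Hy Hd]].
 exists (exist _ y (ex_intro _ N Hy)). unfold embD; simpl. rewrite d_sym by auto. unfold delta in Hd. lra.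
Qed.

Lemma KD_card : card_le_weight M KD.
Proof.
 intros Bs HBs.
 assert (Hlev : forall k : KD, {n | Sq n (embD k)}).
 { intros k. apply constructive_indefinite_description. apply (proj2_sig k). }
 assert (HV : forall k : KD, {V | Bs V /\ V (embD k) /\ forall y, V y -> dist M (embD k) y < delta (proj1_sig (Hlev k)) / 2}).
 { intros k. apply constructive_indefinite_description.
   destruct HBs as [_ Hb].
   destruct (Hb (fun y => dist M (embD k) y < delta (proj1_sig (Hlev k)) / 2) (embD k)) as [V [HV1 [HV2 HV3]]].
   apply ball_open. rewrite d_refl by auto. pose proof (delta_pos (proj1_sig (Hlev k))). lra.
   exists V; auto. }
 exists (fun k => inl (exist _ (proj1_sig (HV k)) (proj1 (proj2_sig (HV k))))).
 intros k1 k2 Heq. injection Heq as Heq.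
 pose proof (proj2_sig (HV k1)) as (B1 & V1x & V1b).
 pose proof (proj2_sig (HV k2)) as (B2 & V2x & V2b).
 rewrite <- Heq in V2x, V2b.
 pose proof (proj2_sig (Hlev k1)) as Hn1. pose proof (proj2_sig (Hlev k2)) as Hn2.
 set (n1 := proj1_sig (Hlev k1)) in *. set (n2 := proj1_sig (Hlev k2)) in *.
 assert (embD k1 = embD k2).
 { apply NNPP; intros Hne.
   pose proof (V1b _ V2x) as D1. pose proof (V2b _ V1x) as D2.
   rewrite d_sym in D2 by auto.
   pose proof (proj1 (Sq_spec (Nat.max n1 n2)) (embD k1) (embD k2)
     (Sq_mono n1 _ (Nat.le_max_l _ _) _ Hn1) (Sq_mono n2 _ (Nat.le_max_r _ _) _ Hn2) Hne) as D3.
   pose proof (delta_pos n1). pose proof (delta_pos n2).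
   destruct (Nat.le_ge_cases n1 n2).
   - rewrite Nat.max_r in D3 by auto. lra.
   - rewrite Nat.max_l in D3 by auto. lra. }
 destruct k1 as [x1 p1], k2 as [x2 p2]. unfold embD in H; simpl in H. subst x2.
 f_equal; apply proof_irrelevance.
Qed.

Lemma inf_K2 (J : Type) (iota : J -> KD) : (forall j1 j2, iota j1 = iota j2 -> j1 = j2) ->
  forall F : J -> I -> Prop, (forall j, A (F j)) -> A (fun i => exists j, F j i).
Proof.
 intros Hinj F HF. apply inf_union; auto. intros Bs HBs.
 destruct (KD_card Bs HBs) as [g Hg]. exists (fun j => g (iota j)). intros; auto.
Qed.

Lemma inf_UP (G : car M -> I -> R) Lc : 0 <= Lc -> (forall d r, A (fun i => r < G d i)) ->
  (forall d d' i, Rabs (G d i - G d' i) <= Lc * dist M d d') ->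
  forall b, measurable_map I A M b -> forall r, A (fun i => r < G (b i) i).
Proof.
 intros HL HG HGl b Hb r.
 apply (A_ext I A (fun i => exists m : nat, exists k : KD,
     dist M (embD k) (b i) < delta m /\ r + Lc * delta m < G (embD k) i)).
 - intros i. split.
   + intros [m [k [H1 H2]]]. specialize (HGl (b i) (embD k) i). apply Rabs_le_between in HGl.
     rewrite d_sym in H1 by auto.
     assert (Lc * dist M (b i) (embD k) <= Lc * delta m) by (apply Rmult_le_compat_l; lra). lra.
   + intros Hr. set (s := G (b i) i - r).
     assert (Hs : s / (2 * Lc + 1) > 0) by (apply Rdiv_lt_0_compat; unfold s; lra).
     destruct (small_inv _ Hs) as [m Hm]. fold (delta m) in Hm.
     destruct (KD_dense (b i) (delta m) (delta_pos m)) as [k Hk].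
     exists m, k. rewrite d_sym by auto. split; auto.
     specialize (HGl (b i) (embD k) i). apply Rabs_le_between in HGl.
     assert (Lc * dist M (b i) (embD k) <= Lc * delta m) by (apply Rmult_le_compat_l; lra).
     assert (delta m * (2 * Lc + 1) < s).
     { apply (Rmult_lt_reg_r (/ (2 * Lc + 1))). apply Rinv_0_lt_compat; lra.
       rewrite Rmult_assoc, Rinv_r by lra. unfold Rdiv in Hm. lra. }
     pose proof (delta_pos m). unfold s in *. nra.
 - apply inf_union.
   + intros Bs HBs. exists (fun n => inr n). intros; congruence.
   + intros m. apply (inf_K2 KD (fun k => k)); auto. intros k. apply (A_and I A mu HA); auto.
     apply ball_meas; auto.
Qed.
End Inf.
End Final.

Theorem mainTheorem10 (L : Lang) (I : Type) (A : (I -> Prop) -> Prop)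
  (mu : (I -> Prop) -> R) (M : Str L) :
  is_charge_space I A mu -> is_structure L M -> meanable I A M ->
  forall (phi : formula L) (a : nat -> I -> car M),
    (forall k, measurable_map I A M (a k)) ->
    evalMmu I A mu M a phi = integral I A mu (fun i => evalM M (fun k => a k i) phi).
Proof.
 intros HA HM Hmean phi a Ha.
 destruct (I_inhabited I A mu HA) as [i0 _].
 set (m0 := a 0%nat i0).
 destruct Hmean as [Hfin|Hcl].
 - apply (thm_all I A mu HA L M HM m0 (car M) (fun d => d)); auto.
   + intros x eps He. exists x. rewrite (d_refl L M HM). lra.
   + eapply fin_K2; eauto.
   + eapply fin_UP; eauto.
 - apply (thm_all I A mu HA L M HM m0 (KD L M HM) (embD L M HM)); auto.
   + eapply KD_dense; eauto.
   + eapply inf_K2; eauto.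
   + eapply inf_UP; eauto.
Qed.
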